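(* Let $\chi,\psi$ be central characters of $U(\mathfrak{gl}_t)$ and suppose $$\chi(u)-\psi(u)=\sum_{i=1}^re^{b_iu}-\sum_{j=1}^se^{(c_j-1)u}$$ for some $b_1,\ldots,b_r,c_1,\ldots,c_s\in\mathbb C$. Then there exist central characters $\chi^{(n)},\psi^{(n)}$ of $U(\mathfrak{gl}_n(\Bbbk))$ with $\chi=\prod_{\mathcal F}\chi^{(n)}$ and $\psi=\prod_{\mathcal F}\psi^{(n)}$ such that for every $n>r+s$ there is a weight $\lambda^{(n)}\in\Bbbk^n$ with $U(\mathfrak{gl}_n(\Bbbk))$ acting on $M_{\lambda^{(n)}}$ by the central character $\chi^{(n)}$ and acting on $M_{\mu^{(n)}}$ by $\psi^{(n)}$, where $\mu^{(n)}=\lambda^{(n)}-e_1-\cdots-e_r+e_{n-s+1}+\cdots+e_n$.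
   Context: $\Bbbk=\overline{\mathbb Q}$; $\mathcal F$ is a fixed nonprincipal ultrafilter on $\mathbb N$ with a fixed field isomorphism $\prod_{\mathcal F}\Bbbk\simeq\mathbb C$, and $t$ is the image of $\prod_{\mathcal F}n$. $e_i$ is the $i$-th standard basis vector of $\Bbbk^n$. For $\mathfrak{gl}_n(\Bbbk)$, $M_\lambda=U(\mathfrak{gl}_n)\otimes_{U(\mathfrak b)}\Bbbk_{\lambda-\rho}$ ($\mathfrak b$ upper triangular Borel, $\rho$ half-sum of positive roots) and $C_k$ ($k\ge1$) is the central element acting on every $M_\lambda$ by $\sum_i\lambda_i^k$. In $U(\mathfrak{gl}_t)$ (universal enveloping algebra of $\mathfrak{gl}_t=V\otimes V^*$ in Deligne's category $\operatorname{Rep}(GL_t)$, realized as an ultraproduct of the $U(\mathfrak{gl}_n(\Bbbk))$), $C_k=\prod_{\mathcal F}C_k$ and $Z(U(\mathfrak{gl}_t))=\mathbb C[C_1,C_2,\ldots]$; a central character is determined by arbitrary values $\psi_k=\psi(C_k)$, and $\psi=\prod_{\mathcal F}\psi^{(n)}$ means $\psi_k=\prod_{\mathcal F}\psi^{(n)}(C_k)$ for all $k$. Generating function: $\psi(u)=\frac{1}{e^u-1}\sum_{k\ge0}\frac{\psi_k}{k!}u^k$, $\psi_0:=1$ (formal factor); so the hypothesis means $\chi_k-\psi_k=\sum_i((b_i+1)^k-b_i^k)+\sum_j((c_j-1)^k-c_j^k)$ for all $k\ge1$. *)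

(* Defs.v *)
From mathcomp Require Import all_boot all_order all_algebra all_field.
Set Implicit Arguments. Unset Strict Implicit. Unset Printing Implicit Defensive.
Import GRing.Theory Num.Theory.
Local Open Scope ring_scope.

(* The field k = Qbar is MathComp's algC (algebraic closure of rat). *)

Definition is_ultrafilter (F : (nat -> Prop) -> Prop) : Prop :=
  [/\ F (fun _ => True),
      ~ F (fun _ => False),
      (forall A B : nat -> Prop, F A -> F B -> F (fun n => A n /\ B n)),
      (forall A B : nat -> Prop, F A -> (forall n, A n -> B n) -> F B)
    & (forall A : nat -> Prop, F A \/ F (fun n => ~ A n))].

Definition nonprincipal (F : (nat -> Prop) -> Prop) : Prop :=
  forall m : nat, ~ F (fun n => n = m).

(* Elements of C = prod_F k are represented by sequences nat -> algC;
   two representatives denote the same element iff they agree F-a.e. *)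
Definition ueq (F : (nat -> Prop) -> Prop) (x y : nat -> algC) : Prop :=
  F (fun n => x n = y n).

(* C_k acts on the Verma module M_lambda by sum_i lambda_i^k; a function
   f : nat -> algC (k |-> value on C_k) is the central character by which
   U(gl_n) acts on M_lambda. *)
Definition acts_on_verma (n : nat) (lam : 'I_n -> algC) (f : nat -> algC) : Prop :=
  forall k : nat, (0 < k)%N -> f k = \sum_(i < n) lam i ^+ k.

(* Central characters of U(gl_n(k)), recorded by their values on C_k (k>=1),
   via the Harish-Chandra parametrization: they are exactly the characters
   by which U(gl_n) acts on some Verma module M_nu. *)
Definition central_char_gl (n : nat) (f : nat -> algC) : Prop :=
  exists nu : 'I_n -> algC, acts_on_verma nu f.

(* mu = lambda - e_1 - ... - e_r + e_{n-s+1} + ... + e_n  (0-indexed) *)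
Definition shift_weight (n r s : nat) (lam : 'I_n -> algC) : 'I_n -> algC :=
  fun i => lam i - (if (i < r)%N then 1 else 0) + (if (n - s <= i)%N then 1 else 0).

(* Main.v *)
Require Import Defs.
From mathcomp Require Import all_boot all_order all_algebra all_field.
From mathcomp Require Import zify ring.
From Stdlib Require Import ClassicalEpsilon.
Import GRing.Theory Num.Theory.
Local Open Scope ring_scope.

Lemma sqrt_exists (m : nat) : exists K : nat, (K * K <= m)%N /\ forall k, (k * k <= m)%N -> (k <= K)%N.
Proof.
elim: m => [|m [K [HK1 HK2]]].
  exists 0%N; split => // k Hk; nia.
have HK3 : (m < K.+1 * K.+1)%N.
  rewrite ltnNge; apply/negP => /HK2; lia.
case: (leqP (K.+1 * K.+1) m.+1) => H.
  exists K.+1; split => // k Hk; nia.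
exists K; split; first nia.
move=> k Hk; nia.
Qed.

Lemma block_exists (d : nat) (c : algC) : (0 < d)%N ->
  exists B : seq algC, size B = d /\ (forall k, (0 < k < d)%N -> \sum_(x <- B) x ^+ k = 0)
     /\ \sum_(x <- B) x ^+ d = c.
Proof.
move=> d0; have [z pz] := C_prim_root_exists d0.
set t := d.-root (c / d%:R).
exists [seq t * z ^+ j | j <- iota 0 d]; split; first by rewrite size_map size_iota.
have E k : \sum_(x <- [seq t * z ^+ j | j <- iota 0 d]) x ^+ k = t ^+ k * \sum_(j < d) (z ^+ k) ^+ j.
  rewrite big_map -{1}(subn0 d) -/(index_iota 0 d) big_mkord.
  rewrite mulr_sumr; apply: eq_bigr => j _; rewrite exprMn -!exprM mulnC //.
split.
  move=> k /andP [k0 kd]; rewrite E.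
  have H1 : (z ^+ k) ^+ d - 1 = 0 by rewrite -exprM mulnC exprM (prim_expr_order pz) expr1n subrr.
  rewrite subrX1 in H1; move/eqP: H1; rewrite mulf_eq0 => /orP [|/eqP->]; last by rewrite mulr0.
  rewrite subr_eq0 -(prim_order_dvd pz) => /dvdn_leq; move/(_ k0); lia.
rewrite E (prim_expr_order pz).
under eq_bigr do rewrite expr1n.
rewrite sumr_const card_ord /t rootCK // mulr_natr -mulr_natr mulfVK //.
by rewrite pnatr_eq0 -lt0n.
Qed.

Lemma match_exists (a : nat -> algC) (K : nat) : exists L : seq algC,
  (size L <= K * K)%N /\ forall k, (0 < k <= K)%N -> \sum_(x <- L) x ^+ k = a k.
Proof.
elim: K => [|K [L [HL1 HL2]]].
  by exists [::]; split => // k; lia.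
have [B [HB1 [HB2 HB3]]] := @block_exists K.+1 (a K.+1 - \sum_(x <- L) x ^+ K.+1) (ltn0Sn K).
exists (L ++ B); split; first by rewrite size_cat HB1; nia.
move=> k /andP [k0]; rewrite leq_eqVlt => /orP [/eqP->|kK].
  by rewrite big_cat /= HB3 addrC subrK.
rewrite big_cat /= HB2 ?k0 // addr0 HL2 //; lia.
Qed.

Lemma sum_nseq0 (N k : nat) : (0 < k)%N -> \sum_(x <- nseq N (0 : algC)) x ^+ k = 0.
Proof.
move=> k0; elim: N => [|N IH]; first by rewrite big_nil.
by rewrite /= big_cons IH expr0n eqn0Ngt k0 addr0.
Qed.

Lemma pad_exists (a : nat -> algC) (m : nat) : exists L : seq algC,
  size L = m /\ forall k, (0 < k)%N -> (k * k <= m)%N -> \sum_(x <- L) x ^+ k = a k.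
Proof.
have [K [HK1 HK2]] := sqrt_exists m.
have [L [HL1 HL2]] := match_exists a K.
exists (L ++ nseq (m - size L) 0); split.
  rewrite size_cat size_nseq; lia.
move=> k k0 kk; rewrite big_cat /= sum_nseq0 // addr0 HL2 //.
by rewrite k0 HK2.
Qed.

Lemma sum_nth (n : nat) (S : seq algC) (f : algC -> algC) :
  size S = n -> \sum_(i < n) f (nth 0 S i) = \sum_(x <- S) f x.
Proof. by move=> <-; rewrite (big_nth 0) big_mkord. Qed.

Lemma sum_enum (r : nat) (g : 'I_r -> algC) (f : algC -> algC) :
  \sum_(x <- [seq g i | i <- enum 'I_r]) f x = \sum_(i < r) f (g i).
Proof. by rewrite big_map big_enum. Qed.

Lemma size_fenum (r : nat) : size (Finite.enum 'I_r) = r.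
Proof. by rewrite -enumT size_enum_ord. Qed.

Lemma weight_exists (n r s : nat) (bn : 'I_r -> algC) (cn : 'I_s -> algC) (chin : nat -> algC) :
 exists lam : 'I_n -> algC, forall k, (0 < k)%N -> (r + s + k * k <= n)%N ->
   \sum_(i < n) lam i ^+ k = chin k /\
   \sum_(i < n) shift_weight r s lam i ^+ k = chin k -
     (\sum_(i < r) ((bn i + 1) ^+ k - bn i ^+ k) + \sum_(j < s) ((cn j - 1) ^+ k - cn j ^+ k)).
Proof.
case: (leqP n (r + s)) => Hn.
  by exists (fun _ => 0) => k k0 H; exfalso; nia.
set S1 := [seq bn i + 1 | i <- enum 'I_r].
set S3 := [seq cn j - 1 | j <- enum 'I_s].
set T1 := [seq bn i | i <- enum 'I_r].
set T3 := [seq cn j | j <- enum 'I_s].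
have [L [HL1 HL2]] := pad_exists
  (fun k => chin k - \sum_(x <- S1) x ^+ k - \sum_(x <- S3) x ^+ k) (n - r - s).
exists (fun i => nth 0 (S1 ++ L ++ S3) i).
have shE : forall i : 'I_n, shift_weight r s (fun i => nth 0 (S1 ++ L ++ S3) i) i
    = nth 0 (T1 ++ L ++ T3) i.
  move=> [i hi]; rewrite /shift_weight /= /S1 /S3 /T1 /T3 !nth_cat !size_map  ?size_fenum ?size_enum_ord HL1.
  case: (ltnP i r) => h1.
    rewrite (nth_map (Ordinal h1)) ?size_fenum ?size_enum_ord // (nth_map (Ordinal h1)) ?size_fenum ?size_enum_ord //.
    have -> : (n - s <= i)%N = false by lia.
    by rewrite addr0 addrK.
  case: (ltnP (i - r) (n - r - s)) => h2.
    have -> : (n - s <= i)%N = false by lia.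
    by rewrite subr0 addr0.
  have h3 : (i - r - (n - r - s) < s)%N by lia.
  rewrite (nth_map (Ordinal h3)) ?size_fenum ?size_enum_ord // (nth_map (Ordinal h3)) ?size_fenum ?size_enum_ord //.
  have -> : (n - s <= i)%N = true by lia.
  by rewrite subr0 subrK.
move=> k k0 hk.
have HLk := HL2 k k0 ltac:(lia).
split.
  rewrite (@sum_nth n (S1 ++ L ++ S3) (fun x => x ^+ k)); last first.
    by rewrite !size_cat !size_map ?size_fenum ?size_enum_ord HL1; lia.
  rewrite !big_cat /= HLk; ring.
rewrite (eq_bigr (fun i : 'I_n => nth 0 (T1 ++ L ++ T3) i ^+ k)); last by move=> i _; rewrite shE.
rewrite (@sum_nth n (T1 ++ L ++ T3) (fun x => x ^+ k)); last first.
  by rewrite !size_cat !size_map ?size_fenum ?size_enum_ord HL1; lia.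
rewrite !big_cat /= HLk !sum_enum !sumrB; ring.
Qed.

Lemma cofinite_in (F : (nat -> Prop) -> Prop) (HF : is_ultrafilter F) (HFnp : nonprincipal F)
  (N : nat) : F (fun n => (N <= n)%N).
Proof.
case: HF => HT HnF Hcap Hsup Hult.
elim: N => [|N IH]; first by apply: Hsup HT _.
have HN : F (fun n => ~ n = N) by case: (Hult (fun n => n = N)) => // /HFnp.
apply: Hsup (Hcap _ _ IH HN) _ => n [h1 h2].
rewrite ltn_neqAle h1 andbT; apply/eqP => e; exact: h2 (esym e).
Qed.

Theorem corollary10
  (F : (nat -> Prop) -> Prop) (HF : is_ultrafilter F) (HFnp : nonprincipal F)
  (chi psi : nat -> nat -> algC) (* chi k = representative of chi(C_k) in C *)
  (r s : nat) (b : 'I_r -> nat -> algC) (c : 'I_s -> nat -> algC)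
  (Hyp : forall k : nat, (0 < k)%N ->
     ueq F (fun n => chi k n - psi k n)
           (fun n => \sum_(i < r) ((b i n + 1) ^+ k - b i n ^+ k)
                   + \sum_(j < s) ((c j n - 1) ^+ k - c j n ^+ k))) :
  exists chin psin : nat -> nat -> algC,
    [/\ forall n, central_char_gl n (chin n),
        forall n, central_char_gl n (psin n),
        forall k, (0 < k)%N -> ueq F (chi k) (fun n => chin n k),
        forall k, (0 < k)%N -> ueq F (psi k) (fun n => psin n k)
      & forall n : nat, (r + s < n)%N ->
          exists lam : 'I_n -> algC,
            acts_on_verma lam (chin n) /\
            acts_on_verma (shift_weight r s lam) (psin n)].
Proof.
pose lamf n := proj1_sig (constructive_indefinite_description _
  (weight_exists n r s (fun i => b i n) (fun j => c j n) (fun k => chi k n))).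
have Hlam n : forall k, (0 < k)%N -> (r + s + k * k <= n)%N ->
   \sum_(i < n) lamf n i ^+ k = chi k n /\
   \sum_(i < n) shift_weight r s (lamf n) i ^+ k = chi k n -
     (\sum_(i < r) ((b i n + 1) ^+ k - b i n ^+ k) + \sum_(j < s) ((c j n - 1) ^+ k - c j n ^+ k)).
  exact: (proj2_sig (constructive_indefinite_description _
    (weight_exists n r s (fun i => b i n) (fun j => c j n) (fun k => chi k n)))).
exists (fun n k => \sum_(i < n) lamf n i ^+ k),
       (fun n k => \sum_(i < n) shift_weight r s (lamf n) i ^+ k).
have HF' := HF; case: HF' => HT HnF Hcap Hsup Hult.
split.
- by move=> n; exists (lamf n).
- by move=> n; exists (shift_weight r s (lamf n)).
- move=> k k0; rewrite /ueq.
  apply: (Hsup _ _ (@cofinite_in F HF HFnp (r + s + k * k))) => n hn.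
  by rewrite (proj1 (Hlam n k k0 hn)).
- move=> k k0; rewrite /ueq; apply: (Hsup _ _ (Hcap _ _ (@cofinite_in F HF HFnp (r + s + k * k)) (Hyp k k0))).
  move=> n [hn e]; rewrite (proj2 (Hlam n k k0 hn)) -e; ring.
- by move=> n _; exists (lamf n).
Qed.
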